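(* Let $\Gamma$ be a MaxSAT instance encoded with blocking variables, with $\mathrm{cost}(\Gamma)=k$, and let $A$ be the set of total assignments $\alpha$ with $\alpha\models\Gamma$ and $\mathrm{cost}(\alpha)=k$. Suppose (1) every two distinct assignments in $A$ have Hamming distance at least $d$, and (2) for every blocking variable $b$ there are $\alpha,\beta\in A$ with $\alpha(b)=0$ and $\beta(b)=1$. Then every derivation in the cost-SR calculus from $\Gamma$ that derives a unit clause $b$ for some blocking variable $b$ contains a clause $C$ introduced by the cost-SR rule whose witnessing substitution $\sigma$ satisfies $\mathrm{flip}(C,\sigma)\ge d$.
   Context: Literals, clauses, CNFs (multisets of clauses), $\mathrm{Var}(\Gamma)$. A substitution $\sigma$ maps each variable to $0$, $1$ or a literal, extended by $\sigma(\lnot x)=\lnot\sigma(x)$, $\sigma(0)=0$, $\sigma(1)=1$; $(\sigma\circ\tau)(x)=\sigma(\tau(x))$. A (partial) assignment has $\sigma(x)\in\{0,1,x\}$; total means all variables get Boolean values. $C{\upharpoonright}_\sigma$: apply $\sigma$ to each literal and simplify; $\sigma\models C$ if the result is $1$ or tautological; $\Gamma{\upharpoonright}_\sigma$ is the multiset of $C{\upharpoonright}_\sigma\neq1$ for $C\in\Gamma$. $\lnot C$ is the partial assignment falsifying all literals of $C$; $\tau\supseteq\rho$ means $\tau$ extends $\rho$. $\Gamma\vdash_1 C$ means unit propagation on $\Gamma{\upharpoonright}_{\lnot C}$ derives the empty clause; $\Gamma\vdash_1\Delta$ means $\Gamma\vdash_1 D$ for all $D\in\Delta$. A MaxSAT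 instance encoded with blocking variables is a CNF $\Gamma=H\cup\{C_1\lor b_1,\dots,C_m\lor b_m\}$ with distinct fresh variables $b_i$ (blocking variables). $\mathrm{cost}(\alpha)=\sum_i\alpha(b_i)$ for total $\alpha$; $\mathrm{cost}(\Gamma)=\min\{\mathrm{cost}(\alpha):\alpha\models\Gamma\}$. A clause $C$ is cost-SR w.r.t. $\Gamma$ via $\sigma$ if (1) $\Gamma{\upharpoonright}_{\lnot C}\vdash_1(\Gamma\cup\{C\}){\upharpoonright}_\sigma$ and (2) $\mathrm{cost}(\tau\circ\sigma)\le\mathrm{cost}(\tau)$ for all total $\tau\supseteq\lnot C$. A derivation in the cost-SR calculus from $\Gamma$ is a sequence $D_1,\dots,D_t$ where each $D_i$ is in $\Gamma$, or follows from earlier clauses by weakening or resolution, or is cost-SR (with an attached witnessing substitution) w.r.t. $\Gamma\cup\{D_1,\dots,D_{i-1}\}$ with $\mathrm{Var}(D_i)\subseteq\mathrm{Var}(\Gamma)$. For a clause $C$ derived by the cost-SR rule with witness $\sigma$, $\mathrm{flip}(C,\sigma)=\max_{\tau\supseteq\lnot C}\mathrm{HD}(\tau,\tau\circ\sigma)$ over total assignments $\tau$, where $\mathrm{HD}$ is the number of variables on which two total assignments differ. *)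

(* Defs.v *)
From mathcomp Require Import all_boot.
Set Implicit Arguments.
Unset Strict Implicit.
Unset Printing Implicit Defensive.

(* A literal is a pair (x, s): (x, true) is the variable x, (x, false) is ~x. *)
Definition lit := (nat * bool)%type.
Definition clause := seq lit.
Definition cnf := seq clause.

Definition lneg (l : lit) : lit := (l.1, ~~ l.2).
Definition cvars (C : clause) : seq nat := map fst C.
Definition vars (F : cnf) : seq nat := flatten (map cvars F).

Inductive sval := SConst of bool | SLit of lit.
Definition subst := nat -> sval.

Definition sv_neg (v : sval) : sval :=
  match v with SConst b => SConst (~~ b) | SLit l => SLit (lneg l) end.

Definition subst_lit (s : subst) (l : lit) : sval :=
  if l.2 then s l.1 else sv_neg (s l.1).

Definition is_true_sv (v : sval) : bool :=
  if v is SConst true then true else false.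
Definition sv_to_lit (v : sval) : option lit :=
  if v is SLit l then Some l else None.

(* C|sigma: None stands for the clause 1 (some literal becomes 1, or the
   result is tautological); otherwise the simplified clause (0's removed,
   duplicates removed). *)
Definition clause_restrict (s : subst) (C : clause) : option clause :=
  let vs := map (subst_lit s) C in
  if has is_true_sv vs then None else
  let ls := pmap sv_to_lit vs in
  if has (fun l => lneg l \in ls) ls then None else Some (undup ls).

Definition cnf_restrict (s : subst) (F : cnf) : cnf :=
  pmap (clause_restrict s) F.

Definition negC (C : clause) : subst := fun x =>
  if (x, true) \in C then SConst false
  else if (x, false) \in C then SConst true
  else SLit (x, true).

Definition assign_lit (l : lit) : subst := fun x =>
  if x == l.1 then SConst l.2 else SLit (x, true).

Inductive up_refutes : cnf -> Prop :=
  | UPEmpty (F : cnf) : [::] \in F -> up_refutes F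
  | UPUnit (F : cnf) (l : lit) :
      [:: l] \in F -> up_refutes (cnf_restrict (assign_lit l) F) -> up_refutes F.

Definition implies1 (F : cnf) (D : clause) : Prop :=
  up_refutes (cnf_restrict (negC D) F).

Definition assignment := nat -> bool.

Definition eval_lit (a : assignment) (l : lit) : bool :=
  if l.2 then a l.1 else ~~ a l.1.
Definition sat_clause (a : assignment) (C : clause) : bool := has (eval_lit a) C.
Definition sat_cnf (a : assignment) (F : cnf) : bool := all (sat_clause a) F.

Definition eval_sval (a : assignment) (v : sval) : bool :=
  match v with SConst b => b | SLit l => eval_lit a l end.

Definition compose (t : assignment) (s : subst) : assignment :=
  fun x => eval_sval t (s x).

Definition extends (t : assignment) (rho : subst) : Prop :=
  forall x b, rho x = SConst b -> t x = b.

(* hard = H, soft = [(C_1,b_1); ...; (C_m,b_m)] *)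
Record maxsat := MaxSAT { hard : cnf ; soft : seq (clause * nat) }.

Definition blocking (I : maxsat) : seq nat := map snd (soft I).

Definition formula (I : maxsat) : cnf :=
  hard I ++ [seq rcons p.1 (p.2, true) | p <- soft I].

Definition wf_maxsat (I : maxsat) : Prop :=
  uniq (blocking I) /\
  forall b, b \in blocking I ->
    b \notin vars (hard I) /\ b \notin vars (map fst (soft I)).

Definition cost (I : maxsat) (a : assignment) : nat :=
  \sum_(b <- blocking I) (a b : nat).

Definition min_cost (I : maxsat) (k : nat) : Prop :=
  (exists a, sat_cnf a (formula I) /\ cost I a = k) /\
  (forall a, sat_cnf a (formula I) -> k <= cost I a).

Definition hd (V : seq nat) (a b : assignment) : nat :=
  count (fun x => a x != b x) (undup V).

Definition cost_SR (I : maxsat) (F : cnf) (C : clause) (s : subst) : Prop :=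
  (forall D, D \in cnf_restrict s (F ++ [:: C]) ->
     implies1 (cnf_restrict (negC C) F) D) /\
  (forall t, extends t (negC C) -> cost I (compose t s) <= cost I t).

Inductive rule :=
  | RAxiom
  | RWeak of nat
  | RRes of nat & nat
  | RSR of subst.

Definition step := (clause * rule)%type.

Definition resolvent (D1 D2 D : clause) : Prop :=
  exists x, (x, true) \in D1 /\ (x, false) \in D2 /\
    D =i [pred l | ((l \in D1) && (l != (x, true))) ||
                   ((l \in D2) && (l != (x, false)))].

Definition step_ok (I : maxsat) (prev : cnf) (st : step) : Prop :=
  let: (D, r) := st in
  match r with
  | RAxiom => D \in formula I
  | RWeak j => j < size prev /\ {subset nth [::] prev j <= D}
  | RRes j1 j2 => [/\ j1 < size prev, j2 < size prev &
                     resolvent (nth [::] prev j1) (nth [::] prev j2) D]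
  | RSR s => {subset cvars D <= vars (formula I)} /\
             cost_SR I (formula I ++ prev) D s
  end.

Definition derivation (I : maxsat) (ds : seq step) : Prop :=
  forall i, i < size ds ->
    step_ok I (map fst (take i ds)) (nth ([::], RAxiom) ds i).

Definition is_flip (I : maxsat) (C : clause) (s : subst) (n : nat) : Prop :=
  (exists t, extends t (negC C) /\ hd (vars (formula I)) t (compose t s) = n) /\
  (forall t, extends t (negC C) -> hd (vars (formula I)) t (compose t s) <= n).

Definition in_A (I : maxsat) (k : nat) (a : assignment) : Prop :=
  sat_cnf a (formula I) /\ cost I a = k.

(* membership of a step in a derivation (steps carry functions, so no eqType) *)
Fixpoint step_in (st : step) (ds : seq step) : Prop :=
  match ds with [::] => False | st' :: ds' => st' = st \/ step_in st ds' end.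

(* Main.v *)
From Stdlib Require Import Classical.
Require Import Defs.
From mathcomp Require Import all_boot.
From mathcomp Require Import zify.

Set Implicit Arguments.
Unset Strict Implicit.
Unset Printing Implicit Defensive.

Lemma eval_sv_neg (a : assignment) v : eval_sval a (sv_neg v) = ~~ eval_sval a v.
Proof. case: v => [c|[x sb]] //=; rewrite /eval_lit /=; case: sb => //=; by rewrite negbK. Qed.

Lemma eval_lneg (a : assignment) l : eval_lit a (lneg l) = ~~ eval_lit a l.
Proof. case: l => x sb; rewrite /eval_lit /=; case: sb => //=; by rewrite negbK. Qed.

Lemma compose_lit a s l : eval_lit (compose a s) l = eval_sval a (subst_lit s l).
Proof.
rewrite /eval_lit /subst_lit /compose; case: (l.2) => //; by rewrite eval_sv_neg.
Qed.

Lemma L1 (a : assignment) (vs : seq Defs.sval) : ~~ has is_true_sv vs ->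
  has (eval_sval a) vs = has (eval_lit a) (pmap sv_to_lit vs).
Proof.
elim: vs => //= v vs IH; case: v => [[]|l] //= H; by rewrite IH.
Qed.

Lemma L2 (a : assignment) (vs : seq Defs.sval) : has is_true_sv vs -> has (eval_sval a) vs.
Proof.
elim: vs => //= v vs IH; case: v => [[]|l] //= H; rewrite ?IH ?orbT //.
Qed.

Lemma L3 (a : assignment) (ls : seq lit) : has (fun l => lneg l \in ls) ls -> has (eval_lit a) ls.
Proof.
move/hasP => [l Hl Hn]; case E: (eval_lit a l).
  by apply/hasP; exists l.
by apply/hasP; exists (lneg l) => //; rewrite eval_lneg E.
Qed.

Lemma has_compose a s E :
  has (eval_lit (compose a s)) E = has (eval_sval a) (map (subst_lit s) E).
Proof. rewrite has_map; apply: eq_has => l /=; by rewrite compose_lit. Qed.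

Lemma restrict_None a s E : clause_restrict s E = None -> sat_clause (compose a s) E.
Proof.
rewrite /clause_restrict /sat_clause has_compose.
case: ifP => [H _|H]; first by apply: L2.
case: ifP => // H2 _; rewrite L1 ?H //; exact: L3.
Qed.

Lemma restrict_Some a s E E' : clause_restrict s E = Some E' ->
  sat_clause (compose a s) E = sat_clause a E'.
Proof.
rewrite /clause_restrict /sat_clause has_compose.
case: ifP => // H; case: ifP => // _ [<-].
by rewrite L1 ?H // has_undup.
Qed.

Lemma sat_clause_ext a a' C : a =1 a' -> sat_clause a C = sat_clause a' C.
Proof. move=> e; apply: eq_has => l; by rewrite /eval_lit e. Qed.

Lemma restrict_sat a s F : compose a s =1 a -> sat_cnf a F -> sat_cnf a (cnf_restrict s F).
Proof.
move=> e; elim: F => //= E F IH /andP [HE HF].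
rewrite /cnf_restrict /=; case eq: (clause_restrict s E) => [E'|] /=; last exact: IH.
rewrite -(restrict_Some a eq) (sat_clause_ext _ e) HE /=; exact: IH.
Qed.

Lemma compose_id a (r : subst) : extends a r ->
  (forall x, (exists c, r x = SConst c) \/ r x = SLit (x, true)) -> compose a r =1 a.
Proof.
move=> He Hr x; rewrite /compose; case: (Hr x) => [[c Hc]|Hc]; rewrite Hc //=.
by rewrite (He _ _ Hc).
Qed.

Lemma negC_form C x : (exists c, negC C x = SConst c) \/ negC C x = SLit (x, true).
Proof. rewrite /negC; case: ifP => _; first by left; exists false.
case: ifP => _; [left; exists true | right] => //. Qed.

Lemma negC_ext a C : ~~ sat_clause a C -> extends a (negC C).
Proof.
move=> /hasPn H x c; rewrite /negC; case: ifP => h1.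
  move=> [<-]; have := H _ h1; rewrite /eval_lit /=; exact: negbTE.
case: ifP => h2 // [<-]; have := H _ h2; rewrite /eval_lit /=; by rewrite negbK.
Qed.

Lemma assign_form l x : (exists c, assign_lit l x = SConst c) \/ assign_lit l x = SLit (x, true).
Proof. rewrite /assign_lit; case: ifP => _; [left; exists l.2 | right] => //. Qed.

Lemma assign_ext a l : eval_lit a l -> extends a (assign_lit l).
Proof.
case: l => y sb; rewrite /eval_lit /assign_lit /= => H x c.
case: eqP => // -> [<-]; case: sb H => //; exact: negbTE.
Qed.

Lemma up_sound G : up_refutes G -> forall a, sat_cnf a G -> False.
Proof.
elim => [F HF|F l Hl _ IH] a Ha.
  by have := allP Ha _ HF.
have := allP Ha _ Hl; rewrite /sat_clause /= orbF => Hel.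
apply: (IH a); apply: restrict_sat => //.
apply: compose_id; [exact: assign_ext | exact: assign_form].
Qed.

Lemma implies1_sound G D a : implies1 G D -> sat_cnf a G -> sat_clause a D.
Proof.
move=> H HG; case: (boolP (sat_clause a D)) => // HD; exfalso.
rewrite /implies1 in H; apply: (up_sound H (a:=a)); apply: restrict_sat => //.
apply: compose_id; [exact: negC_ext | exact: negC_form].
Qed.

Lemma SR_sound I F C s a : cost_SR I F C s -> sat_cnf a F -> ~~ sat_clause a C ->
  sat_cnf (compose a s) (F ++ [:: C]) /\ cost I (compose a s) <= cost I a.
Proof.
move=> [H1 H2] HF HC; split; last by apply: H2; exact: negC_ext.
apply/allP => E HE; case eq: (clause_restrict s E) => [E'|]; last exact: restrict_None.
rewrite (restrict_Some a eq); apply: (implies1_sound (H1 E' _)).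
  by rewrite mem_pmap; apply/mapP; exists E.
apply: restrict_sat => //.
apply: compose_id; [exact: negC_ext | exact: negC_form].
Qed.

Lemma max_ex (P : nat -> Prop) M n0 : P n0 -> (forall n, P n -> n <= M) ->
  exists n, n0 <= n /\ P n /\ forall m, P m -> m <= n.
Proof.
move=> H0 HM; move: {2}(M - n0) (leqnn (M - n0)) => k.
elim: k n0 H0 => [|k IH] n0 H0 Hk.
  exists n0; split => //; split => // m Pm; have := HM _ Pm; lia.
case: (classic (exists m, n0 < m /\ P m)) => [[m [Hm Pm]]|Hno].
  have [|n [Hn1 Hn2]] := IH m Pm.
    have := HM _ Pm; lia.
  exists n; split => //; lia.
exists n0; split => //; split => // m Pm.
rewrite leqNgt; apply/negP => h; apply: Hno; by exists m.
Qed.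

Lemma step_in_nth x0 ds i : i < size ds -> step_in (nth x0 ds i) ds.
Proof. elim: ds i => [|st ds IH] [|i] //= H; [left | right; apply IH] => //. Qed.

Lemma nth_of_step_in x0 st ds : step_in st ds -> exists2 i, i < size ds & nth x0 ds i = st.
Proof.
elim: ds => //= st' ds IH [<-|/IH [i Hi E]]; [by exists 0 | by exists i.+1].
Qed.

Theorem theorem5p1 (I : maxsat) (k d : nat) (ds : seq step) (b : nat) :
  wf_maxsat I ->
  min_cost I k ->
  (forall a1 a2, in_A I k a1 -> in_A I k a2 ->
     (exists2 x, x \in vars (formula I) & a1 x != a2 x) ->
     d <= hd (vars (formula I)) a1 a2) ->
  (forall b', b' \in blocking I ->
     exists a1 a2, [/\ in_A I k a1, in_A I k a2, a1 b' = false & a2 b' = true]) ->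
  derivation I ds ->
  b \in blocking I ->
  (exists D r, step_in (D, r) ds /\ D =i [:: (b, true)]) ->
  exists C s, step_in (C, RSR s) ds /\ exists n, is_flip I C s n /\ d <= n.
Proof.
move=> _ Hmin Hdist HA Hd Hb [D0 [r0 [Hin0 HD0]]].
case: (classic (exists C s, step_in (C, RSR s) ds /\ exists n, is_flip I C s n /\ d <= n)) => // Hng.
exfalso.
have inv : forall i, i <= size ds -> forall a, in_A I k a -> sat_cnf a (map fst (take i ds)).
  elim => [|i IH] Hi a Ha; first by rewrite take0.
  have Hi' : i < size ds by [].
  have IHa := IH (ltnW Hi') a Ha.
  rewrite (take_nth ([::], RAxiom) Hi') map_rcons /sat_cnf all_rcons.
  rewrite /sat_cnf in IHa; rewrite IHa andbT.
  have := Hd i Hi'.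
  case E: (nth _ ds i) => [D r] /=.
  case: r E => [|j|j1 j2|s] E /=.
  - move=> HD; exact: (allP Ha.1 D HD).
  - move=> [Hj Hsub].
    have := allP IHa _ (mem_nth [::] Hj) => /hasP [l Hl He].
    by apply/hasP; exists l => //; apply: Hsub.
  - move=> [Hj1 Hj2 [x [h1 [h2 hD]]]].
    have := allP IHa _ (mem_nth [::] Hj1) => /hasP [l1 Hl1 He1].
    have := allP IHa _ (mem_nth [::] Hj2) => /hasP [l2 Hl2 He2].
    case ax: (a x).
      apply/hasP; exists l2 => //; rewrite hD inE; apply/orP; right; apply/andP; split => //.
      apply/eqP => e; move: He2; by rewrite e /eval_lit /= ax.
    apply/hasP; exists l1 => //; rewrite hD inE; apply/orP; left; apply/andP; split => //.
    apply/eqP => e; move: He1; by rewrite e /eval_lit /= ax.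
  - move=> [Hsub Hcs].
    case: (boolP (sat_clause a D)) => // HnD; exfalso; apply: Hng.
    set prev := map fst (take i ds) in Hcs IHa.
    have HF : sat_cnf a (formula I ++ prev) by rewrite /sat_cnf all_cat; apply/andP; split; [exact: Ha.1 | exact: IHa].
    have [Hsat Hcost] := SR_sound Hcs HF HnD.
    set a' := compose a s in Hsat Hcost.
    move: Hsat; rewrite /sat_cnf all_cat => /andP [/allP Hs12 Hs3].
    have Hs1 : sat_cnf a' (formula I).
      by apply/allP => E0 HE0; apply: Hs12; rewrite mem_cat HE0.
    have HA' : in_A I k a'.
      split => //; have := Hmin.2 _ Hs1; rewrite Ha.2 in Hcost; lia.
    have Hdd : d <= hd (vars (formula I)) a a'.
      apply: Hdist => //.
      move: Hs3 => /= /andP [/hasP [l Hl He] _].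
      exists l.1; first by apply: Hsub; apply/mapP; exists l.
      apply/negP => /eqP e; move/hasPn: HnD => /(_ l Hl); move: He.
      by rewrite /eval_lit e => ->.
    have Hbnd : forall n0, (exists t, extends t (negC D) /\ hd (vars (formula I)) t (compose t s) = n0) -> n0 <= size (undup (vars (formula I))).
      by move=> n0 [t [_ <-]]; exact: count_size.
    have [n [Hn1 [Hn2 Hn3]]] := @max_ex
      (fun n => exists t, extends t (negC D) /\ hd (vars (formula I)) t (compose t s) = n)
      (size (undup (vars (formula I)))) _
      (ex_intro _ a (conj (negC_ext HnD) erefl))
      Hbnd.
    exists D, s; split; first by have := step_in_nth ([::], RAxiom) Hi'; rewrite E.
    exists n; split; last by apply: leq_trans Hn1.
    by split => // t Ht; apply: Hn3; exists t.
have [a1 [a2 [Ha1 _ Hab _]]] := HA b Hb.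
have [i Hi E] := nth_of_step_in ([::], RAxiom) Hin0.
have := inv i.+1 Hi a1 Ha1.
rewrite (take_nth ([::], RAxiom) Hi) map_rcons /sat_cnf all_rcons E /= => /andP [/hasP [l Hl He] _].
move: Hl; rewrite HD0 inE => /eqP e; move: He; by rewrite e /eval_lit /= Hab.
Qed.
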